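(* Let $P\in\mathrm{Sym}(n,\mathbb{R})$ be positive definite, $R\in\mathrm{Sym}(n,\mathbb{R})$, $Q\in\mathrm{Mat}(n,\mathbb{R})$, and for $\lambda\ge0$ let $B_\lambda=\begin{bmatrix}P^{-1}&-P^{-1}Q\\-Q^TP^{-1}&Q^TP^{-1}Q-R-\lambda I_n\end{bmatrix}$. Assume $JB_0$ is hyperbolic. Then for every $\lambda\ge0$ the spectral subspaces $V^+(JB_\lambda)$ and $V^-(JB_\lambda)$ are transversal to $L_D$, i.e. $V^\pm(JB_\lambda)\cap L_D=\{0\}$.
   Context: $J=\begin{bmatrix}0&-I_n\\ I_n&0\end{bmatrix}$; hyperbolic means no eigenvalue on the imaginary axis. $V^+(M)$ (resp. $V^-(M)$) is the real generalized eigenspace of $M$ for eigenvalues with positive (resp. negative) real part. $L_D=\mathbb{R}^n\times\{0\}\subset\mathbb{R}^{2n}$. *)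

(* Defs.v *)
From HB Require Import structures.
From mathcomp Require Import all_boot all_order all_algebra.
From mathcomp Require Import reals complex.
Set Implicit Arguments. Unset Strict Implicit. Unset Printing Implicit Defensive.
Import Order.TTheory GRing.Theory Num.Theory.
Local Open Scope ring_scope.

Section Defs.
Variable R : realType.

Definition cmx m p (M : 'M[R]_(m, p)) : 'M[R[i]]_(m, p) :=
  map_mx (fun x => (x%:C)%C) M.

Definition Jmx n : 'M[R]_(n + n) := block_mx 0 (- 1%:M) 1%:M 0.

Definition Bmx n (P Q Rm : 'M[R]_n) (lam : R) : 'M[R]_(n + n) :=
  block_mx (invmx P) (- (invmx P *m Q))
           (- (Q^T *m invmx P)) (Q^T *m invmx P *m Q - Rm - lam%:M).

Definition sym_mx n (A : 'M[R]_n) := A^T = A.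

Definition posdef_mx n (A : 'M[R]_n) :=
  sym_mx A /\ forall x : 'cV[R]_n, x != 0 -> 0 < (x^T *m A *m x) 0 0.

Definition hyperbolic m (M : 'M[R]_m) :=
  forall mu : R[i], eigenvalue (cmx M) mu -> complex.Re mu != 0.

Definition in_geneig m (M : 'M[R]_m) (mu : R[i]) (w : 'cV[R[i]]_m) :=
  (cmx M - mu%:M) ^+ m *m w = 0.

(* V^+(M) (sgn = true) / V^-(M) (sgn = false): the real generalized eigenspace
   of M for the eigenvalues with positive (resp. negative) real part, i.e. the
   real points of the sum of the complex generalized eigenspaces ker (M - mu)^m
   over such eigenvalues mu. *)
Definition Vspec (sgn : bool) m (M : 'M[R]_m) (v : 'cV[R]_m) :=
  exists s : seq (R[i] * 'cV[R[i]]_m),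
    [/\ forall p, p \in s ->
          (if sgn then 0 < complex.Re p.1 else complex.Re p.1 < 0)
          /\ in_geneig M p.1 p.2
      & cmx v = \sum_(p <- s) p.2].

Definition LD n (v : 'cV[R]_(n + n)) := exists x : 'cV[R]_n, v = col_mx x 0.

End Defs.

(* Main.v *)
Require Import Defs.
From HB Require Import structures.
From mathcomp Require Import all_boot all_order all_algebra.
From mathcomp Require Import reals complex.
Import Order.TTheory GRing.Theory Num.Theory.
Local Open Scope ring_scope.
From mathcomp Require Import lra.
Lemma cmxM (R : realType) m n p (A : 'M[R]_(m,n)) (B : 'M[R]_(n,p)) : cmx (A *m B) = cmx A *m cmx B.
Proof. exact: (map_mxM (real_complex R)). Qed.
Lemma cmxT (R : realType) m n (A : 'M[R]_(m,n)) : cmx (A^T) = (cmx A)^T.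
Proof. by apply/matrixP=> i j; rewrite !mxE. Qed.
Lemma cmxN (R : realType) m n (A : 'M[R]_(m,n)) : cmx (- A) = - (cmx A).
Proof. exact: (map_mxN (real_complex R)). Qed.
Lemma ReD (R : realType) (a b : R[i]) : complex.Re (a + b) = complex.Re a + complex.Re b.
Proof. by case: a; case: b. Qed.
Lemma iso (F : fieldType) m (J H : 'M[F]_m) (mu nu : F) :
  H^T *m J = - (J *m H) -> mu + nu != 0 ->
  forall k (u : 'cV_m), (H - mu%:M)^+k *m u = 0 ->
  forall l (v : 'cV_m), (H - nu%:M)^+l *m v = 0 -> u^T *m J *m v = 0.
Proof.
have eS : forall (A : 'M[F]_m) k, A^+k *m A = A^+k.+1 by move=> A k'; rewrite exprSr.
move=> HJ munu; elim=> [|k IHk] u hu.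
  by move: hu; rewrite expr0 mul1mx => -> l v _; rewrite trmx0 !mul0mx.
elim=> [|l IHl] v hv.
  by move: hv; rewrite expr0 mul1mx => ->; rewrite mulmx0.
set u1 := (H - mu%:M) *m u.
set v1 := (H - nu%:M) *m v.
have hu1 : (H - mu%:M)^+k *m u1 = 0 by rewrite /u1 mulmxA eS.
have hv1 : (H - nu%:M)^+l *m v1 = 0 by rewrite /v1 mulmxA eS.
have Hu : H *m u = mu *: u + u1 by rewrite /u1 mulmxBl mul_scalar_mx addrC subrK.
have Hv : H *m v = nu *: v + v1 by rewrite /v1 mulmxBl mul_scalar_mx addrC subrK.
have e1 : (H *m u)^T *m J *m v = mu *: (u^T *m J *m v).
  by rewrite Hu linearD /= linearZ /= mulmxDl mulmxDl (IHk _ hu1 _ _ hv) addr0 -!scalemxAl.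
have e2 : (H *m u)^T *m J *m v = - nu *: (u^T *m J *m v).
  rewrite trmx_mul -[u^T *m H^T *m J]mulmxA HJ mulmxN mulNmx -!mulmxA Hv !mulmxDr !mulmxA -[_ *m (H - nu%:M) *m v]mulmxA -/v1 (IHl _ hv1) addr0.
  by rewrite -scalemxAr scaleNr.
have : (mu + nu) *: (u^T *m J *m v) = 0.
  by rewrite scalerDl -[nu]opprK scaleNr -e2 e1 subrr.
by move/eqP; rewrite scaler_eq0 (negPf munu) => /eqP.
Qed.

Theorem lemma4p1 (R : realType) (n : nat) (P Q Rm : 'M[R]_n) :
  posdef_mx P -> sym_mx Rm ->
  hyperbolic (Jmx R n *m Bmx P Q Rm 0) ->
  forall lam : R, 0 <= lam ->
  forall sgn : bool, forall v : 'cV[R]_(n + n),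
    Vspec sgn (Jmx R n *m Bmx P Q Rm lam) v -> LD v -> v = 0.
Proof.
move=> [Psym Ppos] Rsym _ lam _ sgn v [s [hs hv]] [x vx].
have Psym' : P^T = P := Psym.
set J := Jmx R n; set B := Bmx P Q Rm lam; set H := J *m B.
have Bsym : B^T = B.
  have Rsym' : Rm^T = Rm := Rsym.
  rewrite /B /Bmx tr_block_mx !raddfN /= !raddfB /= !trmx_mul.
  by rewrite !trmx_inv Psym' Rsym' trmxK tr_scalar_mx !mulmxA.
have JJ : J *m J = - 1%:M.
  rewrite /J /Jmx mulmx_block !mulmx0 !mul0mx !addr0 !add0r mulmx1 mulmxN mulmx1.
  by rewrite [in RHS](scalar_mx_block n n) opp_block_mx !oppr0.
have JT : J^T = - J.
  rewrite /J /Jmx tr_block_mx !trmx0 tr_scalar_mx linearN /= tr_scalar_mx.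
  by rewrite opp_block_mx !oppr0 opprK.
have HJ : (cmx H)^T *m cmx J = - (cmx J *m cmx H).
  rewrite -cmxT -cmxM -cmxM -cmxN; congr cmx.
  rewrite /H trmx_mul Bsym JT mulmxN mulNmx -mulmxA JJ mulmxN mulmx1 opprK.
  by rewrite mulmxA JJ mulNmx mul1mx opprK.
have key : forall p q, p \in s -> q \in s ->
    p.2^T *m cmx J *m (cmx H *m q.2) = 0.
  move=> p q hp hq; have [sp gp] := hs p hp; have [sq gq] := hs q hq.
  have munu : p.1 + q.1 != 0.
    apply/eqP => e; have := congr1 (@complex.Re R) e; rewrite ReD /=.
    by case: sgn sp sq {hs} => sp sq; lra.
  have -> : cmx H *m q.2 = q.1 *: q.2 + (cmx H - q.1%:M) *m q.2.
    by rewrite mulmxBl mul_scalar_mx addrC subrK.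
  rewrite mulmxDr -scalemxAr (@iso _ _ _ _ _ _ HJ munu _ _ gp _ _ gq) scaler0 add0r.
  apply: (@iso _ _ _ _ _ _ HJ munu _ _ gp (n + n)).
  rewrite mulmxA -[X in X *m _ = _]exprSr exprS -mulmxA.
  by move: gq; rewrite /in_geneig => ->; rewrite mulmx0.
have tot : (cmx v)^T *m cmx J *m (cmx H *m cmx v) = 0.
  rewrite hv raddf_sum /= mulmx_sumr mulmx_suml mulmx_suml big_seq big1 // => p hp.
  by rewrite mulmx_sumr big_seq big1 // => q hq; apply: key.
have tot' : v^T *m J *m (H *m v) = 0.
  move: tot; rewrite -cmxT -!cmxM => e; apply/matrixP => i j.
  have := congr1 (fun M : 'M[R[i]]_1 => M i j) e; rewrite !mxE.
  by case.
have E : v^T *m J *m (H *m v) = - (x^T *m invmx P *m x).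
  rewrite /H mulmxA [v^T *m J *m _]mulmxA -[v^T *m J *m J]mulmxA JJ mulmxN mulmx1 mulNmx mulNmx; congr (- _).
  rewrite vx tr_col_mx /B /Bmx mul_row_block trmx0 !mul0mx !addr0 mul_row_col.
  by rewrite mulmx0 addr0.
case: (eqVneq x 0) => [x0|xn0]; first by rewrite vx x0 col_mx0.
have pos : 0 < (x^T *m invmx P *m x) 0 0.
  case: (boolP (P \in unitmx)) => hu; last by rewrite invmx_out //; apply: Ppos.
  set y := invmx P *m x.
  have xy : x = P *m y by rewrite /y mulKVmx.
  have yn0 : y != 0 by apply: contraNneq xn0 => e; rewrite xy e mulmx0.
  rewrite -mulmxA -/y {1}xy trmx_mul Psym' -/y.
  by apply: Ppos.
move: tot'; rewrite E => /eqP; rewrite oppr_eq0 => /eqP e.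
by move: pos; rewrite e mxE ltxx.
Qed.
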